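(* Let $k=k(n)$ and $m=m(n)$ be functions of $n$ such that $m\geq n$ and $\liminf_{n\rightarrow\infty} \frac{k^2n}{m\log n}>1$. Then asymptotically almost surely $G(n,m,k)$ contains no connected component of size $s$ with $m/k< s\leq n/2$.
   Context: The uniform random intersection graph $G(n,m,k)$ (for positive integers $k\le m$) is the random graph on a set $V$ of $n$ nodes defined as follows: fix a set $M$ of $m$ colours; to each node $v\in V$ assign a subset $F_v\subseteq M$ of exactly $k$ distinct colours, chosen uniformly at random among all $k$-subsets of $M$, independently for different nodes; distinct nodes $u,v$ are joined by an edge if and only if $F_u\cap F_v\neq\emptyset$. An event holds asymptotically almost surely if its probability tends to $1$ as $n\rightarrow\infty$. Here $\log$ denotes the natural logarithm. *)

(* Defs.v *)
From mathcomp Require Import all_boot all_order all_algebra.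
From mathcomp Require Import all_classical all_reals all_analysis.

Set Implicit Arguments.
Unset Strict Implicit.
Unset Printing Implicit Defensive.

Definition assignment (n m : nat) := {ffun 'I_n -> {set 'I_m}}.

Definition valid_assignment (n m k : nat) (F : assignment n m) : bool :=
  [forall v, #|F v| == k].

Definition rig_edge (n m : nat) (F : assignment n m) : rel 'I_n :=
  fun u v => (u != v) && ~~ [disjoint F u & F v].

Definition component (n m : nat) (F : assignment n m) (v : 'I_n) : {set 'I_n} :=
  [set w | connect (rig_edge F) v w].

(* There is a component of size s with m/k < s <= n/2
   (written in nat: m < s*k and 2s <= n, valid since k > 0). *)
Definition has_mid_component (n m k : nat) (F : assignment n m) : bool :=
  [exists v, (m < #|component F v| * k) && (#|component F v|.*2 <= n)].

(* Probability of event E in G(n,m,k): uniform over all valid assignments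
   (independent uniform k-subsets for each node). *)
Definition rig_prob (R : realType) (n m k : nat) (E : pred (assignment n m)) : R :=
  (#|[set F : assignment n m | valid_assignment k F && E F]|%:R /
   #|[set F : assignment n m | valid_assignment k F]|%:R)%R.

(* Main.v *)
Require Import Defs.
From mathcomp Require Import all_boot all_order all_algebra.
From mathcomp Require Import all_classical all_reals all_analysis.
From mathcomp Require Import zify ring lra.
Set Implicit Arguments.
Unset Strict Implicit.
Unset Printing Implicit Defensive.

Local Close Scope ring_scope.


Lemma foldr_prod (T : finType) (f : T -> nat) :
  foldr muln 1 [seq f x | x : T] = \prod_x f x.
Proof. by rewrite foldrE big_map enumT. Qed.

Section Comb.
Variables (n m k : nat).
Implicit Type F : assignment n m.

Definition good (S : {set 'I_n}) (A : {set 'I_m}) F : bool :=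
  [forall v, if v \in S then F v \subset A else F v \subset ~: A].

Lemma sep F : has_mid_component k F ->
  exists (S : {set 'I_n}) (A : {set 'I_m}), [&& (m < #|S| * k)%N, (#|S|.*2 <= n)%N & good S A F].
Proof.
case/existsP=> v /andP[h1 h2].
set C := component F v.
exists C, (\bigcup_(w in C) F w); rewrite h1 h2 /=.
apply/forallP=> w; case: ifPn => wC.
  exact: finset.bigcup_sup.
apply/fintype.subsetP=> c cw; rewrite inE; apply/negP => /bigcupP[w' w'C cw'].
move: (wC); rewrite inE => /negP; apply.
move: (w'C); rewrite inE => cvw'.
apply: (connect_trans cvw'); apply: connect1.
rewrite /rig_edge /=; apply/andP; split.
  by apply/eqP => eqw; move: wC; rewrite -eqw w'C.
by apply/negP => H; move: (disjointFr H cw'); rewrite cw.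
Qed.

Lemma card_good S A :
  #|[set F | valid_assignment k F && good S A F]| =
  ('C(#|A|, k) ^ #|S| * 'C(m - #|A|, k) ^ (n - #|S|))%N.
Proof.
pose D (v : 'I_n) := [set B : {set 'I_m} |
   (if v \in S then B \subset A else B \subset ~: A) & #|B| == k].
have -> : #|[set F | valid_assignment k F && good S A F]| =
   #|(family (fun v => mem (D v)) : simpl_pred (assignment n m))|.
  apply: eq_card => F; rewrite inE; apply/andP/familyP.
    move=> [/forallP hv /forallP hg] v; rewrite /D inE hv andbT.
    by have := hg v.
  move=> h; split; apply/forallP => v; have := h v; rewrite /D inE;
    by case/andP.
rewrite card_family foldr_prod.
rewrite (eq_bigr (fun v => if v \in S then 'C(#|A|, k) else 'C(m - #|A|, k))); last first.
  move=> v _; rewrite /D; case vS: (v \in S).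
    by rewrite -cards_draws; apply: eq_card => B; rewrite !inE.
  have -> : (m - #|A| = #|~: A|)%N by have h := cardsC A; rewrite card_ord in h; apply: (@addnI #|A|); rewrite h subnKC // -[X in (_ <= X)%N](card_ord m) max_card.
  rewrite -cards_draws.
  by apply: eq_card => B; rewrite !inE.
rewrite (bigID (mem S)) /=.
rewrite (eq_bigr (fun _ => 'C(#|A|, k))); last by move=> v ->.
rewrite [X in (_ * X)%N](eq_bigr (fun _ => 'C(m - #|A|, k))); last by move=> v /negbTE ->.
rewrite !prod_nat_const; congr (_ ^ _ * _ ^ _)%N.
by rewrite -[X in _ = X - _](card_ord n) -(cardC (mem S)) addKn; apply: eq_card.
Qed.

Lemma card_valid :
  #|[set F : assignment n m | valid_assignment k F]| = ('C(m, k) ^ n)%N.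
Proof.
have -> : #|[set F : assignment n m | valid_assignment k F]| =
   #|(family (fun v : 'I_n => mem [set B : {set 'I_m} | #|B| == k]) : simpl_pred (assignment n m))|.
  apply: eq_card => F; rewrite inE; apply/forallP/familyP => h v; have := h v; by rewrite inE.
rewrite card_family foldr_prod card_draws card_ord.
by rewrite prod_nat_const card_ord.
Qed.

End Comb.

Local Close Scope ring_scope.

Lemma sum_card (T : finType) (P : pred nat) (g : nat -> nat) :
  (\sum_(X : {set T} | P #|X|) g #|X| =
   \sum_(0 <= i < #|T|.+1 | P i) 'C(#|T|, i) * g i)%N.
Proof.
rewrite big_mkord.
rewrite (partition_big (fun X : {set T} => inord #|X| : 'I_#|T|.+1)
   (fun i : 'I_#|T|.+1 => P i)) /=; last first.
  by move=> X PX; rewrite inordK // ltnS max_card.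
apply: eq_bigr => i Pi.
rewrite (eq_bigl (fun X : {set T} => #|X| == i)); last first.
  move=> X; apply/andP/eqP.
    by case=> _ /eqP <-; rewrite inordK // ltnS max_card.
  by move=> e; rewrite e Pi; split => //; apply/eqP/val_inj; rewrite /= inordK // -e ltnS max_card.
rewrite (eq_bigr (fun _ => g i)); last by move=> X /eqP ->.
by rewrite big_const iter_addn_0 mulnC -card_draws; congr (_ * _)%N; apply: eq_card => X; rewrite inE.
Qed.

Section Union.
Variables (n m k : nat).

Lemma bad_bound :
  (#|[set F : assignment n m | valid_assignment k F && has_mid_component k F]| <=
  \sum_(S : {set 'I_n} | (m < #|S| * k) && (#|S|.*2 <= n))
     \sum_(A : {set 'I_m}) #|[set F | valid_assignment k F && good S A F]|)%N.
Proof.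
rewrite -sum1_card.
apply: (@leq_trans (\sum_(F in [set F : assignment n m | valid_assignment k F && has_mid_component k F])
  \sum_(S : {set 'I_n} | (m < #|S| * k) && (#|S|.*2 <= n))
     \sum_(A : {set 'I_m}) (valid_assignment k F && good S A F : nat))).
  apply: leq_sum => F; rewrite inE => /andP[vF hF].
  have [S [A /and3P[h1 h2 h3]]] := sep hF.
  rewrite (bigD1 S) ?h1 ?h2 //= (bigD1 A) //= vF h3.
  by rewrite -addnA leq_addr.
rewrite exchange_big /=; apply: leq_sum => S _.
rewrite exchange_big /=; apply: leq_sum => A _.
rewrite -sum1_card big_mkcond [X in (_ <= X)%N]big_mkcond /=.
apply: leq_sum => F _; rewrite !inE.
by case: (valid_assignment k F); case: (has_mid_component k F); case: (good S A F).
Qed.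

End Union.

Local Close Scope ring_scope.
Import Order.TTheory GRing.Theory Num.Theory.

Lemma ffact_ratio a m k : (a <= m)%N -> (a ^_ k * m ^ k <= m ^_ k * a ^ k)%N.
Proof.
move=> am; elim: k => [|k IH]; first by rewrite !ffactn0 !expn0.
rewrite !ffactnSr !expnS.
have h : ((a - k) * m <= (m - k) * a)%N by nia.
have := leq_mul IH h; nia.
Qed.

Lemma bin_ratio a m k : (a <= m)%N -> ('C(a, k) * m ^ k <= 'C(m, k) * a ^ k)%N.
Proof.
move=> am; rewrite -(leq_pmul2r (fact_gt0 k)) mulnAC bin_ffact.
by rewrite mulnAC bin_ffact ffact_ratio.
Qed.

Local Open Scope ring_scope.

Lemma binom_term (R : realType) (m u : nat) (x : R) : (u <= m)%N -> 0 <= x <= 1 ->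
  'C(m, u)%:R * x ^+ u * (1 - x) ^+ (m - u) <= 1.
Proof.
move=> um /andP[x0 x1].
have := exprDn (1 - x) x m; rewrite subrK expr1n => h.
rewrite [leRHS]h (bigD1 (Ordinal (um : (u < m.+1)%N)))//=.
have -> : 'C(m,u)%:R * x^+u * (1-x)^+(m-u) = (1 - x) ^+ (m - u) * x ^+ u *+ 'C(m, u)
  by rewrite -mulr_natl; ring.
rewrite lerDl sumr_ge0// => i _.
by rewrite mulrn_wge0// mulr_ge0// exprn_ge0// subr_ge0.
Qed.

Section RealBounds.
Variable R : realType.

Lemma pow_le_expR (x : R) (a : nat) : 0 <= x -> x ^+ a <= expR (a%:R * (x - 1)).
Proof.
move=> x0; rewrite expRM_natl; apply: lerXn2r; rewrite ?nnegrE ?expR_ge0 //.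
by have := expR_ge1Dx (x - 1); rewrite addrC subrK.
Qed.

Lemma fact_bound (s : nat) : (0 < s)%N -> (s%:R ^+ s / s`!%:R : R) <= expR s%:R.
Proof.
case: s => [//|s] _.
have := @expR_ge1Dxn R s.+1%:R s (ler0n _ _).
by apply: le_trans; rewrite lerDr.
Qed.

Lemma k_bound (k : nat) : (100 <= k)%N ->
  k%:R * expR 1 * expR (- (k%:R / 2)) <= expR (- (k%:R / 4)) :> R.
Proof.
move=> k100.
have kR : 100 <= (k%:R : R) by rewrite (ler_nat R 100 k).
set y := k%:R / 4 - 1 : R.
have y0 : 0 <= y by rewrite /y; lra.
have := @expR_ge1Dxn R y 1 y0.
rewrite /= expr2 => hy.
have hk : (k%:R : R) <= expR y.
  apply: le_trans hy; rewrite /y (_ : 2`!%:R = 2 :> R) //; nra.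
have -> : expR (- (k%:R / 4)) = expR y * (expR 1 * expR (- (k%:R / 2))) :> R.
  by rewrite -!expRD /y; congr expR; lra.
rewrite -mulrA ler_pM2r ?mulr_gt0 ?expR_gt0 //.
Qed.

End RealBounds.

Lemma ffact_le_exp n s : (n ^_ s <= n ^ s)%N.
Proof.
elim: s => [|s IH]; first by rewrite ffactn0.
by rewrite ffactnSr expnS mulnC leq_mul ?leq_subr.
Qed.

Section RealBounds2.
Variable R : realType.

Lemma binR (a m k : nat) : (0 < m)%N -> (a <= m)%N ->
  ('C(a,k)%:R : R) <= 'C(m,k)%:R * (a%:R / m%:R) ^+ k.
Proof.
move=> m0 am; rewrite expr_div_n mulrA ler_pdivlMr ?exprn_gt0 ?ltr0n //.
by rewrite -!natrX -!natrM ler_nat bin_ratio.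
Qed.

Lemma binom_le n s : ('C(n,s)%:R : R) <= n%:R ^+ s / s`!%:R.
Proof.
rewrite ler_pdivlMr ?ltr0n ?fact_gt0 // -natrM bin_ffact -natrX ler_nat.
exact: ffact_le_exp.
Qed.

Lemma cns_bound (n m k s : nat) : (100 <= k)%N -> (n <= m)%N -> (m < s * k)%N ->
  ('C(n,s)%:R : R) * expR (- ((k * s)%:R / 2)) <= expR (- (m%:R / 4)).
Proof.
move=> k100 nm msk.
have s0 : (0 < s)%N by case: s msk => //; rewrite mul0n.
have h1 : ('C(n,s)%:R : R) <= k%:R ^+ s * expR s%:R.
  apply: (le_trans (binom_le n s)).
  apply: (@le_trans _ _ ((k * s)%:R ^+ s / s`!%:R)).
    rewrite ler_pM2r ?invr_gt0 ?ltr0n ?fact_gt0 //.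
    by rewrite lerXn2r ?nnegrE ?ler0n // ler_nat mulnC; lia.
  rewrite natrM exprMn -mulrA ler_pM2l ?exprn_gt0 ?ltr0n //; first exact: fact_bound.
  lia.
apply: (le_trans (ler_wpM2r (expR_ge0 _) h1)).
have -> : k%:R ^+ s * expR s%:R * expR (- ((k * s)%:R / 2)) =
   (k%:R * expR 1 * expR (- (k%:R / 2))) ^+ s :> R.
  rewrite !exprMn -!expRM_natl; congr (_ * expR _ * expR _).
    by rewrite mulr1.
  by rewrite natrM; lra.
apply: (le_trans (lerXn2r s _ _ (k_bound R k100))); rewrite ?nnegrE ?mulr_ge0 ?expR_ge0 //.
rewrite -expRM_natl ler_expR.
have : (m%:R : R) <= (s * k)%:R by rewrite ler_nat ltnW.
rewrite natrM; lra.
Qed.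

End RealBounds2.

Section Term.
Variable R : realType.

Lemma term_bound (n m k s u : nat) : (100 <= k)%N -> (n <= m)%N -> (m < s * k)%N ->
  (s.*2 <= n)%N -> (u <= m)%N ->
  (('C(n,s) * ('C(m,u) * ('C(u,k) ^ s * 'C(m - u,k) ^ (n - s))))%:R : R)
    <= expR (- (m%:R / 4)) * ('C(m,k) ^ n)%:R.
Proof.
move=> k100 nm msk sn um.
have m0 : (0 < m)%N by case: s msk sn nm => [|s]; [rewrite mul0n | rewrite -addnn addSn; lia].
have mR : (0 : R) < m%:R by rewrite ltr0n.
set X : R := u%:R / m%:R.
have X0 : 0 <= X by rewrite /X divr_ge0 ?ler0n.
have X1 : X <= 1 by rewrite /X ler_pdivrMr // mul1r ler_nat.
have uX : (u%:R : R) = X * m%:R by rewrite /X divfK // gt_eqF.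
have hP : ('C(u,k)%:R : R) <= 'C(m,k)%:R * X ^+ k by apply: binR.
have hQ : ('C(m - u,k)%:R : R) <= 'C(m,k)%:R * (1 - X) ^+ k.
  have -> : 1 - X = (m - u)%:R / m%:R by rewrite natrB // /X; field; rewrite gt_eqF.
  by apply: binR => //; rewrite leq_subr.
set c : R := 'C(m,k)%:R.
have c0 : 0 <= c by rewrite /c ler0n.
have hPQ : (('C(u,k) ^ s * 'C(m - u,k) ^ (n - s))%:R : R) <=
    c ^+ n * (X ^+ (k * s) * (1 - X) ^+ (k * (n - s))).
  rewrite natrM !natrX.
  apply: (le_trans (ler_pM _ _ (lerXn2r s _ _ hP) (lerXn2r (n - s) _ _ hQ)));
    rewrite ?nnegrE ?ler0n ?mulr_ge0 ?exprn_ge0 ?subr_ge0 ?X0 ?X1 //.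
  rewrite !exprMn -!exprM mulrACA -exprD.
  have -> : (s + (n - s) = n)%N by lia.
  by [].
set a := (k * s - u)%N.
set b := (k * (n - s) - (m - u))%N.
have e1 : (k * s = u + a)%N by rewrite /a; lia.
have e2 : (k * (n - s) = (m - u) + b)%N by rewrite /b; nia.
have hD : 'C(m,u)%:R * (X ^+ (k * s) * (1 - X) ^+ (k * (n - s))) <=
    expR (- ((k * s)%:R / 2)) :> R.
  rewrite e1 e2 !exprD.
  have -> : 'C(m,u)%:R * (X ^+ u * X ^+ a * ((1 - X) ^+ (m - u) * (1 - X) ^+ b)) =
     ('C(m,u)%:R * X ^+ u * (1 - X) ^+ (m - u)) * (X ^+ a * (1 - X) ^+ b) :> R by ring.
  apply: (le_trans (ler_wpM2r _ (binom_term (R := R) um _))); rewrite ?mulr_ge0 ?exprn_ge0 ?subr_ge0 ?X0 ?X1 //.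
  rewrite mul1r.
  apply: (le_trans (ler_pM _ _ (pow_le_expR a X0) (pow_le_expR b (x := 1 - X) _)));
    rewrite ?exprn_ge0 ?subr_ge0 //.
  rewrite -expRD ler_expR.
  have ha : (a%:R : R) = (k * s)%:R - u%:R by rewrite natrB //; lia.
  have hb : (b%:R : R) = (k * (n - s))%:R - m%:R + u%:R.
    by rewrite /b natrB ?natrB //; try (lra || nia).
  rewrite ha hb uX !natrM natrB; last lia.
  have hs : (s%:R : R) * 2 <= n%:R by rewrite -natrM ler_nat muln2.
  have hm : (m%:R : R) <= k%:R * s%:R by rewrite -natrM ler_nat mulnC ltnW.
  have h1 : 0 <= k%:R * X * (n%:R - s%:R * 2) :> R by rewrite mulr_ge0 ?mulr_ge0 ?ler0n ?subr_ge0.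
  have h2 : 0 <= m%:R * (2 * X - 1) ^+ 2 :> R by rewrite mulr_ge0 ?ler0n ?sqr_ge0.
  rewrite expr2 in h2.
  nra.
apply: (@le_trans _ _ (c ^+ n * ('C(n,s)%:R * expR (- ((k * s)%:R / 2))))); last first.
  rewrite mulrC /c -natrX; apply: ler_wpM2r; first exact: ler0n.
  exact: cns_bound.
rewrite [('C(n,s) * _)%:R]natrM [('C(m,u) * _)%:R]natrM.
apply: (@le_trans _ _ ('C(n,s)%:R * ('C(m,u)%:R * (c ^+ n * (X ^+ (k * s) * (1 - X) ^+ (k * (n - s))))))).
  by apply: ler_wpM2l; rewrite ?ler0n //; apply: ler_wpM2l; rewrite ?ler0n.
have -> : 'C(n,s)%:R * ('C(m,u)%:R * (c ^+ n * (X ^+ (k * s) * (1 - X) ^+ (k * (n - s))))) =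
  c ^+ n * ('C(n,s)%:R * ('C(m,u)%:R * (X ^+ (k * s) * (1 - X) ^+ (k * (n - s))))) :> R by ring.
apply: ler_wpM2l; first exact: exprn_ge0.
by apply: ler_wpM2l; rewrite ?ler0n.
Qed.

End Term.

Local Close Scope ring_scope.
Import Order.TTheory GRing.Theory Num.Theory.

Lemma bad_bound2 n m k :
  (#|[set F : assignment n m | valid_assignment k F && has_mid_component k F]| <=
  \sum_(s < n.+1 | (m < s * k) && (s.*2 <= n))
     'C(n, s) * \sum_(u < m.+1) 'C(m, u) * ('C(u, k) ^ s * 'C(m - u, k) ^ (n - s)))%N.
Proof.
apply: leq_trans (@bad_bound n m k) _; rewrite leq_eqVlt; apply/orP; left; apply/eqP.
have inner s : (\sum_(A : {set 'I_m}) ('C(#|A|,k) ^ s * 'C(m - #|A|,k) ^ (n - s)) =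
   \sum_(u < m.+1) 'C(m,u) * ('C(u,k) ^ s * 'C(m - u,k) ^ (n - s)))%N.
  have := sum_card 'I_m (fun _ => true) (fun a => 'C(a,k) ^ s * 'C(m - a,k) ^ (n - s))%N.
  by rewrite card_ord /= big_mkord => ->.
under eq_bigr => S _ do (under eq_bigr => A _ do rewrite card_good; rewrite inner).
have := sum_card 'I_n (fun s => (m < s * k) && (s.*2 <= n))%N
   (fun s => \sum_(u < m.+1) 'C(m,u) * ('C(u,k) ^ s * 'C(m - u,k) ^ (n - s)))%N.
by rewrite card_ord /= big_mkord.
Qed.

Local Open Scope ring_scope.

Lemma ratio_bound (R : realType) n m k : (100 <= k)%N -> (n <= m)%N ->
  (#|[set F : assignment n m | valid_assignment k F && has_mid_component k F]|%:R : R)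
   <= (n.+1 * m.+1)%:R * (expR (- (m%:R / 4)) * ('C(m,k) ^ n)%:R).
Proof.
move=> k100 nm.
have hb := bad_bound2 n m k; rewrite -(ler_nat R) in hb; apply: (le_trans hb).
set E : R := expR (- (m%:R / 4)) * ('C(m,k) ^ n)%:R.
have E0 : 0 <= E by rewrite mulr_ge0 ?expR_ge0 ?ler0n.
rewrite natr_sum.
apply: (@le_trans _ _ (\sum_(s < n.+1) (m.+1)%:R * E)); last first.
  rewrite sumr_const card_ord le_eqVlt; apply/orP; left; apply/eqP; rewrite -[_ *+ n.+1]mulr_natl natrM; ring.
rewrite [leRHS](bigID (fun s : 'I_n.+1 => (m < s * k) && (s.*2 <= n))%N) /=.
rewrite -[leLHS]addr0 lerD //; last by rewrite sumr_ge0 // => i _; rewrite mulr_ge0.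
apply: ler_sum => s /andP[h1 h2].
rewrite natrM natr_sum big_distrr /=.
apply: (@le_trans _ _ (\sum_(u < m.+1) E)); last by rewrite sumr_const card_ord mulr_natl.
apply: ler_sum => u _.
rewrite -natrM.
apply: term_bound => //.
by rewrite -ltnS.
Qed.

Local Close Scope ring_scope.
Import Order.TTheory GRing.Theory Num.Theory.

Lemma card_split n m k :
  (#|[set F : assignment n m | valid_assignment k F && ~~ has_mid_component k F]| +
   #|[set F : assignment n m | valid_assignment k F && has_mid_component k F]| =
   #|[set F : assignment n m | valid_assignment k F]|)%N.
Proof.
rewrite -(cardsID [set F : assignment n m | has_mid_component k F]
   [set F : assignment n m | valid_assignment k F]) addnC.
by congr (_ + _)%N; apply: eq_card => F; rewrite !inE // andbC.
Qed.

Local Open Scope ring_scope.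

Lemma tail_bound (R : realType) (n m : nat) : (1 <= n)%N -> (n <= m)%N ->
  (n.+1 * m.+1)%:R * expR (- (m%:R / 4)) <= 1536 / n%:R :> R.
Proof.
move=> n1 nm.
have N1 : (1 : R) <= n%:R by rewrite (ler_nat R 1 n).
have NM : (n%:R : R) <= m%:R by rewrite ler_nat.
set x := expR (m%:R / 4) : R.
have x0 : 0 < x by exact: expR_gt0.
have hx : (m%:R : R) ^+ 3 / 384 <= x.
  have := @expR_ge1Dxn R (m%:R / 4) 2 (divr_ge0 (ler0n _ _) (ler0n _ _)).
  apply: le_trans.
  rewrite (_ : 3`!%:R = 6 :> R) //; apply: ler_wpDl => //.
  by rewrite le_eqVlt; apply/orP; left; apply/eqP; field.
rewrite expRN -/x natrM.
have n0 : (0:R) < n%:R by lra.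
rewrite ler_pdivlMr //.
rewrite mulrAC ler_pdivrMr //.
rewrite -[n.+1]addn1 -[m.+1]addn1 !natrD.
have h3 : (m%:R : R) ^+ 3 <= 384 * x by rewrite -ler_pdivrMl //; lra.
have M1 : (1 : R) <= m%:R by lra.
set M : R := m%:R in h3 M1 NM *.
set N : R := n%:R in N1 NM n0 *.
apply: (@le_trans _ _ ((M + 1) * (M + 1) * M)).
  apply: ler_pM; [nra|lra|idtac|lra].
  apply: ler_pM; lra.
apply: (@le_trans _ _ (4 * M ^+ 3)); last lra.
rewrite !exprS expr0 mulr1.
have h4 : (M + 1) * (M + 1) <= 4 * (M * M) by nra.
nra.
Qed.

Local Close Scope ring_scope.
Import Order.TTheory GRing.Theory Num.Theory.
Local Open Scope ring_scope.

Lemma k_large (R : realType) (K N M : nat) : (N <= M)%N ->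
  1 < (K ^ 2 * N)%:R / (M%:R * ln (N%:R : R)) -> 10000 <= ln (N%:R : R) ->
  (100 <= K)%N.
Proof.
move=> NM h L.
set l := ln (N%:R : R) in h L.
have NMR : (N%:R : R) <= M%:R by rewrite ler_nat.
have [M0|M0] := eqVneq M 0%N.
  by move: h; rewrite M0 mul0r invr0 mulr0 ltr10.
have MR : (0 : R) < M%:R by rewrite ltr0n lt0n.
have den : 0 < M%:R * l by rewrite mulr_gt0 //; lra.
move: h; rewrite ltr_pdivlMr // mul1r natrM natrX => h.
rewrite leqNgt; apply/negP => K99.
have KR : (K%:R : R) <= 99 by rewrite (ler_nat R K 99) -ltnS.
have K0 : (0 : R) <= K%:R by exact: ler0n.
have N0 : (0 : R) <= N%:R by exact: ler0n.
have h1 : N%:R * l <= M%:R * l by rewrite ler_wpM2r //; lra.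
have h2 : (K%:R : R) ^+ 2 <= 9801 by rewrite expr2; nra.
rewrite expr2 in h h2.
nra.
Qed.

Lemma ln_large (R : realType) : exists N1, forall n, (N1 <= n)%N -> 10000 <= ln (n%:R : R).
Proof.
have e0 : (0 : R) <= expR 10000 by exact: expR_ge0.
have := Num.Theory.archi_boundP e0.
set N1 := Num.Def.archi_bound _ => hN1.
exists N1 => n nN1.
have hn : expR 10000 <= (n%:R : R).
  by apply/ltW/(lt_le_trans hN1); rewrite ler_nat.
have := hn; rewrite -{1}(expRK 10000) => _.
rewrite -[X in X <= _](expRK 10000) ler_ln ?posrE ?expR_gt0 //.
exact: (lt_le_trans (expR_gt0 _) hn).
Qed.

Local Close Scope ring_scope.
Import Order.TTheory GRing.Theory Num.Theory.

Lemma liminf_event (R : realType) (u : nat -> R) :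
  (1%:E < limn_einf (fun n => (u n)%:E))%E -> exists N, forall n, (N <= n)%N -> (1 < u n)%R.
Proof.
rewrite limn_einf_lim (cvg_lim _ (@cvg_einfs_sup R (fun n => (u n)%:E))); last exact: ereal_hausdorff.
move=> /ereal_sup_gt[_ [N _ <-] hN].
exists N => n Nn.
have : (einfs (fun n => (u n)%:E) N <= (u n)%:E)%E.
  by apply: ereal_inf_lbound; exists n.
by move=> /(lt_le_trans hN); rewrite lte_fin.
Qed.

Local Open Scope ring_scope.
Lemma prob_bound (R : realType) (n M K : nat) : (100 <= K)%N -> (K <= M)%N -> (1 <= n)%N ->
  (n <= M)%N ->
  `|1 - rig_prob R K (fun F : assignment n M => ~~ has_mid_component K F)| <= 1536 / n%:R.
Proof.
move=> kn KM n1 nM.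
have -> : rig_prob R K (fun F : assignment n M => ~~ has_mid_component K F) =
  #|[set F : assignment n M | valid_assignment K F && ~~ has_mid_component K F]|%:R /
  #|[set F : assignment n M | valid_assignment K F]|%:R by [].
have hs := card_split n M K.
have rb := ratio_bound R kn nM.
have tb := tail_bound R n1 nM.
rewrite card_valid in hs *.
set G := #|[set F : assignment n M | valid_assignment K F && ~~ has_mid_component K F]| in hs *.
set B := #|[set F : assignment n M | valid_assignment K F && has_mid_component K F]| in hs rb *.
set V := ('C(M, K) ^ n)%N in hs rb *.
have Vpos : (0 < V)%N by rewrite /V expn_gt0 bin_gt0 KM.
have VR : (0 : R) < V%:R by rewrite ltr0n.
have -> : 1 - G%:R / V%:R = B%:R / V%:R :> R.
  rewrite -hs natrD; field; rewrite -natrD hs; exact: lt0r_neq0.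
rewrite ger0_norm ?divr_ge0 ?ler0n //.
rewrite ler_pdivrMr //.
apply: (le_trans rb).
rewrite mulrA ler_wpM2r ?ler0n //.
Qed.

Local Close Scope ring_scope.
Import numFieldNormedType.Exports.
Local Open Scope classical_set_scope.

Theorem lemma8 (R : realType) (k m : nat -> nat)
  (hk : forall n, (0 < k n)%N) (hkm : forall n, (k n <= m n)%N)
  (hm : forall n, (n <= m n)%N)
  (hlim : (1%:E < limn_einf (fun n : nat =>
      ((((k n) ^ 2 * n)%:R / ((m n)%:R * ln (n%:R : R)))%R)%:E))%E) :
  (fun n : nat => rig_prob R (k n)
      (fun F : assignment n (m n) => ~~ has_mid_component (k n) F))
    @ \oo --> (1%R : R).
Proof.
have [N0 hN0] := liminf_event
  (u := fun n => (((k n) ^ 2 * n)%:R / ((m n)%:R * ln (n%:R : R)))%R) hlim.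
have [N1 hN1] := ln_large R.
have kbig : forall n, (maxn N0 N1 <= n)%N -> (100 <= k n)%N.
  move=> n hn; apply: (@k_large R (k n) n (m n)) => //; [apply: hN0 | apply: hN1]; lia.
apply/cvgrPdist_le => eps eps0.
have e0 : ((0:R) <= 1536 / eps)%R by apply: divr_ge0; [exact: ler0n | exact: ltW].
have := Num.Theory.archi_boundP e0; set N2 := Num.Def.archi_bound _ => hN2.
exists (maxn (maxn N0 N1) N2.+1) => // n /= hn.
have kn : (100 <= k n)%N by apply: kbig; lia.
have n1 : (1 <= n)%N by lia.
have nN2 : (((N2.+1)%:R : R) <= n%:R)%R by rewrite ler_nat; lia.
have pb := prob_bound R kn (hkm n) n1 (hm n).
apply: (le_trans pb).
have n0 : ((0 : R) < n%:R)%R by rewrite ltr0n.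
rewrite ler_pdivrMr //.
have : (1536 / eps < n%:R)%R by apply: (lt_le_trans hN2); apply: le_trans nN2; rewrite ler_nat.
rewrite ltr_pdivrMr //; lra.
Qed.
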